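(* Let $\phi$ be a PDL formula in negation normal form, and let $T$ be an expanded tableau whose root is $r=(\{\phi\} :: [\,],\bot,\emptyset,\emptyset :: \mathrm{stat},\mathrm{uev})$, with $\mathrm{stat}$ and $\mathrm{uev}$ determined from the children of $r$ by the rules. If $r$ is not open (i.e. $\mathrm{stat}_r\ne\mathbf{open}$), then $\phi$ is not satisfiable.
   Context: Syntax and semantics of PDL. Fix disjoint countably infinite sets $\mathrm{AFml}$ (atoms $p,q,\dots$) and $\mathrm{APrg}$ (atomic programs $a,b,\dots$). Formulae and programs are defined by mutual induction. Atoms are formulae and atomic programs are programs. If $\varphi,\psi$ are formulae, then $\neg\varphi$, $\varphi\wedge\psi$, $\varphi\vee\psi$ are formulae and $\varphi?$ is a program. If $\varphi$ is a formula and $\alpha$ a program, then $\langle\alpha\rangle\varphi$ and $[\alpha]\varphi$ are formulae. If $\alpha,\beta$ are programs, then $\alpha;\beta$, $\alpha\cup\beta$ and $\alpha^*$ are programs. A model $M=(W,R,V)$ has a nonempty set $W$, relations $R_a\subseteq W\times W$ for $a\in\mathrm{APrg}$, and $V:\mathrm{AFml}\to2^W$. Truth and program relations are defined as follows. - Booleans are standard: $p$ holds at $w$ iff $w\in V(p)$, and $\neg,\wedge,\vee$ are interpreted as usual. - $\langle\alpha\rangle\varphi$ holds at $w$ iff some $v$ with $(w,v)\in[\![\alpha]\!]$ satisfies $\varphi$; $[\alpha]\varphi$ holds at $w$ iff all such $v$ satisfy $\varphi$. - $[\![a]\!]=R_a$; $[\![\alpha\cup\beta]\!]=[\![\alpha]\!]\cup[\![\beta]\!]$;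 $[\![\alpha;\beta]\!]$ is relational composition of $[\![\alpha]\!]$ and $[\![\beta]\!]$; $[\![\alpha^*]\!]$ is the reflexive–transitive closure of $[\![\alpha]\!]$; $[\![\varphi?]\!]=\{(w,w): w\text{ satisfies }\varphi\}$. - $\phi$ is satisfiable iff it holds at some world of some model. A $\langle\rangle$-formula is any $\langle\alpha\rangle\varphi$. It is a non-atomic diamond formula if $\alpha\notin\mathrm{APrg}$. A $\langle{*}\rangle$-formula is any $\langle\alpha^*\rangle\varphi$. NNF: $\neg$ occurs only directly before atoms. $\mathrm{nnf}(\varphi)$ is the equivalent NNF formula obtained by pushing negations inward, and ${\sim}\varphi:=\mathrm{nnf}(\neg\varphi)$. Let $\mathrm{ppre}(\varphi):=\{\langle\alpha_1\rangle\cdots\langle\alpha_k\rangle\varphi:k\ge0\}$. Tableau nodes. A node has the form $(\Gamma :: \mathrm{HCr},\mathrm{Nx},\mathrm{BD},\mathrm{BB} :: \mathrm{stat},\mathrm{uev})$, where: - $\Gamma$ is a finite set of formulae; - $\mathrm{HCr}$ is a finite list of pairs $(\varphi,\Delta)$ with $\varphi\in\Delta$, with length $\mathrm{len}$, $j$-th entry $\mathrm{HCr}[j]$, and concatenation $@$; - $\mathrm{Nx}$ is $\bot$ or a formula; - $\mathrm{BD},\mathrm{BB}$ are sets of formulae; - $\mathrm{stat}\in\{\mathbf{unsat},\mathbf{open},\mathbf{barred}\}$; - $\mathrm{uev}$ is a partial function from pairs ($\langle\rangle$-formula, $\langle{*}\rangle$-formula) to positive integers ($\bot$ = undefined). Auxiliary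 functions: - $\mathrm{uev}_\bot$ is everywhere undefined. - $\mathrm{tst}(\chi)=\chi$ if $\chi$ is a non-atomic diamond formula, else $\bot$. - $\mathrm{bl}(\chi,\Gamma)=\Gamma$ if $\chi$ is a non-atomic diamond formula, else $\emptyset$. - $\min_\bot(f,g)$ is undefined where either argument is undefined, else the pointwise minimum. Rules. The premise set is the displayed principal formula disjointly united with $\Gamma$. Unmentioned histories are copied to children; one-child rules copy the child's $\mathrm{stat}$ to the parent. Terminal rules: - (id): applicable if $\{p,\neg p\}\subseteq\Gamma$; set $\mathrm{stat}:=\mathbf{unsat}$ and $\mathrm{uev}:=\mathrm{uev}_\bot$. - ($\langle*\rangle_2$): premise $\langle\alpha^*\rangle\varphi,\Gamma$ with $\mathrm{Nx}\in\{\bot,\langle\alpha^*\rangle\varphi\}$ and $\langle\alpha^*\rangle\varphi\in\mathrm{BD}$; set $\mathrm{stat}:=\mathbf{barred}$ and $\mathrm{uev}:=\mathrm{uev}_\bot$. Linear rules with $\mathrm{Nx}=\bot$, in each of which $\mathrm{uev}(\chi_1,\chi_2)=\mathrm{uev}_1(\chi_1,\chi_2)$ if $\chi_1\in\Gamma$, else $\bot$: - ($\wedge$): $\varphi\wedge\psi,\Gamma$ has the child $\{\varphi,\psi\}\cup\Gamma$; - ($[\cup]$): $[\alpha\cup\beta]\varphi,\Gamma$ has the child $\{[\alpha]\varphi,[\beta]\varphi\}\cup\Gamma$; - ($[;]$): $[\alpha;\beta]\varphi,\Gamma$ has the child $\{[\alpha][\beta]\varphi\}\cup\Gamma$; - ($[*]$):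 $[\alpha^*]\varphi,\Gamma$ has a child with set $\Gamma$ if $[\alpha^*]\varphi\in\mathrm{BB}$ and $\{\varphi,[\alpha][\alpha^*]\varphi\}\cup\Gamma$ otherwise, and $\mathrm{BB}_1=\{[\alpha^*]\varphi\}\cup\mathrm{BB}$. Further linear rules: - ($\langle;\rangle$): premise $\langle\alpha;\beta\rangle\varphi,\Gamma$ with $\mathrm{Nx}\in\{\bot,\text{principal}\}$. The child is $\{\langle\alpha\rangle\langle\beta\rangle\varphi\}\cup\Gamma$ with $\mathrm{Nx}_1=\mathrm{tst}(\langle\alpha\rangle\langle\beta\rangle\varphi)$ and $\mathrm{BD}_1=\mathrm{bl}(\langle\alpha\rangle\langle\beta\rangle\varphi,\mathrm{BD})$. Set $\mathrm{uev}(\chi_1,\chi_2)$ to be $\mathrm{uev}_1(\langle\alpha\rangle\langle\beta\rangle\varphi,\chi_2)$ if $\chi_1$ is principal; $\mathrm{uev}_1(\chi_1,\chi_2)$ if $\chi_1\in\Gamma$; and $\bot$ otherwise. - ($\langle?\rangle$): premise $\langle\psi?\rangle\varphi,\Gamma$ with $\mathrm{Nx}\in\{\bot,\text{principal}\}$. The child is $\{\psi,\varphi\}\cup\Gamma$ with $\mathrm{Nx}_1=\mathrm{tst}(\varphi)$ and $\mathrm{BD}_1=\mathrm{bl}(\varphi,\mathrm{BD})$. Set $\mathrm{uev}(\chi_1,\chi_2)$ to be $\mathrm{uev}_1(\varphi,\chi_2)$ if $\chi_1$ is principal; $\mathrm{uev}_1(\chi_1,\chi_2)$ if $\chi_1\in\Gamma$;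 and $\bot$ otherwise. Branching rules ($i=1,2$): - ($\vee$): premise $\varphi_1\vee\varphi_2,\Gamma$ with $\mathrm{Nx}=\bot$; children $\{\varphi_i\}\cup\Gamma$. - ($[?]$): premise $[\psi?]\varphi,\Gamma$ with $\mathrm{Nx}=\bot$; children $\{{\sim}\psi\}\cup\Gamma$ and $\{\varphi\}\cup\Gamma$. - For both of these, $\mathrm{uev}'_i(\chi_1,\chi_2)=\mathrm{uev}_i(\chi_1,\chi_2)$ if $\chi_1\in\Gamma$, else $\bot$. - ($\langle\cup\rangle$): premise $\langle\alpha_1\cup\alpha_2\rangle\varphi,\Gamma$ with $\mathrm{Nx}\in\{\bot,\text{principal}\}$. The children are $\{\langle\alpha_i\rangle\varphi\}\cup\Gamma$ with $\mathrm{Nx}_i=\mathrm{tst}(\langle\alpha_i\rangle\varphi)$ and $\mathrm{BD}_i=\mathrm{bl}(\langle\alpha_i\rangle\varphi,\mathrm{BD})$. Set $\mathrm{uev}'_i(\chi_1,\chi_2)$ to be $\mathrm{uev}_i(\langle\alpha_i\rangle\varphi,\chi_2)$ if $\chi_1$ is principal; $\mathrm{uev}_i(\chi_1,\chi_2)$ if $\chi_1\in\Gamma$; and $\bot$ otherwise. - ($\langle*\rangle_1$): premise $\langle\alpha^*\rangle\varphi,\Gamma$ with $\mathrm{Nx}\in\{\bot,\langle\alpha^*\rangle\varphi\}$ and $\langle\alpha^*\rangle\varphi\notin\mathrm{BD}$. - Child 1 is $\{\varphi\}\cup\Gamma$ with $\mathrm{Nx}_1=\mathrm{tst}(\varphi)$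 and $\mathrm{BD}_1=\mathrm{bl}(\varphi,\{\langle\alpha^*\rangle\varphi\}\cup\mathrm{BD})$. - Child 2 is $\{\langle\alpha\rangle\langle\alpha^*\rangle\varphi\}\cup\Gamma$ with $\mathrm{Nx}_2=\mathrm{tst}(\langle\alpha\rangle\langle\alpha^*\rangle\varphi)$ and $\mathrm{BD}_2=\mathrm{bl}(\langle\alpha\rangle\langle\alpha^*\rangle\varphi,\{\langle\alpha^*\rangle\varphi\}\cup\mathrm{BD})$. - $\mathrm{uev}'_1(\chi_1,\chi_2)$ is $\bot$ if $\chi_1=\chi_2=\langle\alpha^*\rangle\varphi$; $\mathrm{uev}_1(\varphi,\chi_2)$ if $\chi_1=\langle\alpha^*\rangle\varphi\ne\chi_2$; $\mathrm{uev}_1(\chi_1,\chi_2)$ if $\chi_1\in\Gamma$; and $\bot$ otherwise. - $\mathrm{uev}'_2(\chi_1,\chi_2)$ is $\mathrm{uev}_2(\langle\alpha\rangle\langle\alpha^*\rangle\varphi,\chi_2)$ if $\chi_1=\langle\alpha^*\rangle\varphi$; $\mathrm{uev}_2(\chi_1,\chi_2)$ if $\chi_1\in\Gamma$; and $\bot$ otherwise. For all branching rules, the parent's variables are computed as follows. - $\mathrm{stat}=\mathbf{unsat}$ if both children are $\mathbf{unsat}$; $\mathbf{open}$ if some child is $\mathbf{open}$; and $\mathbf{barred}$ otherwise. - $\mathrm{uev}=\mathrm{uev}_\bot$ if $\mathrm{stat}\ne\mathbf{open}$. - Otherwise $\mathrm{uev}=\mathrm{uev}'_i$ if only child $i$ is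 open, and $\min_\bot(\mathrm{uev}'_1,\mathrm{uev}'_2)$ if both are open. Existential rule ($\langle\rangle$). The premise set is $\{\langle a_1\rangle\varphi_1,\dots,\langle a_{n+m}\rangle\varphi_{n+m}\}\uplus[-]\Delta\uplus\Gamma$, $n+m\ge0$, subject to the following conditions. - Each $a_i\in\mathrm{APrg}$. - $\Gamma$ consists of atoms and negated atoms only, with no $\{p,\neg p\}\subseteq\Gamma$. - $[-]\Delta$ consists only of formulae $[a]\psi$ with $a\in\mathrm{APrg}$. - Let $\Delta_i=\{\psi:[a_i]\psi\in[-]\Delta\}$. For $i\le n$, $(\varphi_i,\{\varphi_i\}\cup\Delta_i)$ is not an entry of $\mathrm{HCr}$. For $n<k\le n+m$, $(\varphi_k,\{\varphi_k\}\cup\Delta_k)=\mathrm{HCr}[j]$ for some $j$. The children, for $i\le n$, are $\{\varphi_i\}\cup\Delta_i$ with $\mathrm{HCr}_i=\mathrm{HCr}\,@\,[(\varphi_i,\{\varphi_i\}\cup\Delta_i)]$, $\mathrm{Nx}_i=\mathrm{tst}(\varphi_i)$ and $\mathrm{BD}_i=\mathrm{BB}_i=\emptyset$. The parent's variables are computed as follows. - $\mathrm{stat}=\mathbf{unsat}$ if some $i\le n$ has $\mathrm{stat}_i\ne\mathbf{open}$, or there exist $i\le n$ and a $\langle{*}\rangle$-formula $\psi$ with $\varphi_i\in\mathrm{ppre}(\psi)$ and $\mathrm{uev}_i(\varphi_i,\psi)$ defined and $>\mathrm{len}(\mathrm{HCr})$. Otherwise $\mathrm{stat}=\mathbf{open}$.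 - For $n<k\le n+m$, $\mathrm{uev}_k$ is constantly $j$, where $\mathrm{HCr}[j]=(\varphi_k,\{\varphi_k\}\cup\Delta_k)$. - $\mathrm{uev}(\chi_1,\chi_2)=\mathrm{uev}_i(\varphi_i,\chi_2)$ if $\mathrm{stat}=\mathbf{open}$, $\chi_2$ is a $\langle{*}\rangle$-formula, $\chi_1\in\mathrm{ppre}(\chi_2)$ and $\chi_1=\langle a_i\rangle\varphi_i$ for some $i\le n+m$. Otherwise $\mathrm{uev}(\chi_1,\chi_2)=\bot$. Tableau. A tableau is a tree of nodes whose children at each node arise from a single application of one applicable rule (free choice), with each parent's $\mathrm{stat}$ and $\mathrm{uev}$ computed from its children. It is expanded if no rule can be applied to any leaf. *)

(* Defs.v *)
From Stdlib Require Import List Arith Relations.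
Import ListNotations.

Inductive form : Type :=
| Atom : nat -> form
| Neg : form -> form
| And : form -> form -> form
| Or : form -> form -> form
| Dia : prog -> form -> form
| Box : prog -> form -> form
with prog : Type :=
| Aprog : nat -> prog
| Test : form -> prog
| Seq : prog -> prog -> prog
| Choice : prog -> prog -> prog
| Star : prog -> prog.

Record model : Type := Model {
  W : Type;
  R : nat -> W -> W -> Prop;
  V : nat -> W -> Prop }.

Fixpoint holds (M : model) (w : W M) (f : form) {struct f} : Prop :=
  match f with
  | Atom p => V M p w
  | Neg g => ~ holds M w g
  | And g h => holds M w g /\ holds M w h
  | Or g h => holds M w g \/ holds M w h
  | Dia a g => exists v, rel M a w v /\ holds M v g
  | Box a g => forall v, rel M a w v -> holds M v g
  end
with rel (M : model) (a : prog) {struct a} : W M -> W M -> Prop :=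
  match a with
  | Aprog n => R M n
  | Test f => fun w v => w = v /\ holds M w f
  | Seq a b => fun w v => exists u, rel M a w u /\ rel M b u v
  | Choice a b => fun w v => rel M a w v \/ rel M b w v
  | Star a => clos_refl_trans (W M) (rel M a)
  end.

(* phi is satisfiable iff it holds at some world of some model
   (the world witnesses nonemptiness of W). *)
Definition satisfiable (f : form) : Prop := exists (M : model) (w : W M), holds M w f.

Fixpoint is_nnf (f : form) : Prop :=
  match f with
  | Atom _ => True
  | Neg g => match g with Atom _ => True | _ => False end
  | And g h | Or g h => is_nnf g /\ is_nnf h
  | Dia a g | Box a g => is_nnfp a /\ is_nnf g
  end
with is_nnfp (a : prog) : Prop :=
  match a with
  | Aprog _ => True
  | Test f => is_nnf f
  | Seq a b | Choice a b => is_nnfp a /\ is_nnfp b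
  | Star a => is_nnfp a
  end.

Fixpoint nnf (f : form) : form :=
  match f with
  | Atom p => Atom p
  | Neg g => nnfneg g
  | And g h => And (nnf g) (nnf h)
  | Or g h => Or (nnf g) (nnf h)
  | Dia a g => Dia (nnfp a) (nnf g)
  | Box a g => Box (nnfp a) (nnf g)
  end
with nnfneg (f : form) : form :=
  match f with
  | Atom p => Neg (Atom p)
  | Neg g => nnf g
  | And g h => Or (nnfneg g) (nnfneg h)
  | Or g h => And (nnfneg g) (nnfneg h)
  | Dia a g => Box (nnfp a) (nnfneg g)
  | Box a g => Dia (nnfp a) (nnfneg g)
  end
with nnfp (a : prog) : prog :=
  match a with
  | Aprog n => Aprog n
  | Test f => Test (nnf f)
  | Seq a b => Seq (nnfp a) (nnfp b)
  | Choice a b => Choice (nnfp a) (nnfp b)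
  | Star a => Star (nnfp a)
  end.

Definition snot (f : form) : form := nnf (Neg f).

Definition is_nad (f : form) : bool :=
  match f with
  | Dia (Aprog _) _ => false
  | Dia _ _ => true
  | _ => false
  end.

Definition is_stardia (f : form) : bool :=
  match f with Dia (Star _) _ => true | _ => false end.

Inductive ppre (psi : form) : form -> Prop :=
| ppre0 : ppre psi psi
| ppreS : forall a f, ppre psi f -> ppre psi (Dia a f).

Definition tst (f : form) : option form := if is_nad f then Some f else None.

Inductive status : Type := Unsat | Open | Barred.

Definition uevT : Type := form -> form -> option nat.
Definition uev_bot : uevT := fun _ _ => None.

Definition minb (x y : option nat) : option nat :=
  match x, y with Some a, Some b => Some (Nat.min a b) | _, _ => None end.

(* Finite sets of formulae are represented by lists, read up to set equality. *)
Record node : Type := mkNode {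
  nG : list form;
  nH : list (form * list form);
  nNx : option form;                (* Nx, None = bot *)
  nBD : list form;
  nBB : list form;
  nStat : status;
  nUev : uevT }.

Definition seteqP (l : list form) (P : form -> Prop) : Prop :=
  forall x, In x l <-> P x.

(* the side set Gamma when pi is the principal formula *)
Definition inG (n : node) (pi : form) (x : form) : Prop := In x (nG n) /\ x <> pi.

Definition blP (chi : form) (B : form -> Prop) (x : form) : Prop :=
  is_nad chi = true /\ B x.

Definition Nx_ok (n : node) (pi : form) : Prop := nNx n = None \/ nNx n = Some pi.

(* HCr[j] = (phi, D) with D equal (as a set) to P; HCr is 1-indexed. *)
Definition hentry (H : list (form * list form)) (j : nat) (phi : form)
  (P : form -> Prop) : Prop :=
  1 <= j /\ exists D, nth_error H (j - 1) = Some (phi, D) /\ seteqP D P.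

Definition uev_std (n : node) (pi : form) (u uc : uevT) : Prop :=
  forall c1 c2, (inG n pi c1 -> u c1 c2 = uc c1 c2) /\
                (~ inG n pi c1 -> u c1 c2 = None).

Definition uev_rep (n : node) (pi rho : form) (u uc : uevT) : Prop :=
  forall c1 c2, (c1 = pi -> u c1 c2 = uc rho c2) /\
                (inG n pi c1 -> u c1 c2 = uc c1 c2) /\
                (c1 <> pi -> ~ inG n pi c1 -> u c1 c2 = None).

Definition lin_std (n k : node) (pi : form) (new bb : form -> Prop) : Prop :=
  In pi (nG n) /\ nNx n = None /\
  seteqP (nG k) (fun x => new x \/ inG n pi x) /\
  nH k = nH n /\ nNx k = nNx n /\
  seteqP (nBD k) (fun x => In x (nBD n)) /\ seteqP (nBB k) bb /\
  nStat n = nStat k /\ uev_std n pi (nUev n) (nUev k).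

Definition rule_and (n : node) (ks : list node) : Prop :=
  exists k f g, ks = [k] /\
    lin_std n k (And f g) (fun x => x = f \/ x = g) (fun x => In x (nBB n)).

Definition rule_boxcup (n : node) (ks : list node) : Prop :=
  exists k a b f, ks = [k] /\
    lin_std n k (Box (Choice a b) f) (fun x => x = Box a f \/ x = Box b f)
      (fun x => In x (nBB n)).

Definition rule_boxseq (n : node) (ks : list node) : Prop :=
  exists k a b f, ks = [k] /\
    lin_std n k (Box (Seq a b) f) (fun x => x = Box a (Box b f))
      (fun x => In x (nBB n)).

Definition rule_boxstar (n : node) (ks : list node) : Prop :=
  exists k a f, ks = [k] /\
    lin_std n k (Box (Star a) f)
      (fun x => ~ In (Box (Star a) f) (nBB n) /\
                (x = f \/ x = Box a (Box (Star a) f)))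
      (fun x => x = Box (Star a) f \/ In x (nBB n)).

Definition lin_dia (n k : node) (pi rho : form) (new : form -> Prop) : Prop :=
  In pi (nG n) /\ Nx_ok n pi /\
  seteqP (nG k) (fun x => new x \/ inG n pi x) /\
  nH k = nH n /\ nNx k = tst rho /\
  seteqP (nBD k) (blP rho (fun x => In x (nBD n))) /\
  seteqP (nBB k) (fun x => In x (nBB n)) /\
  nStat n = nStat k /\ uev_rep n pi rho (nUev n) (nUev k).

Definition rule_diaseq (n : node) (ks : list node) : Prop :=
  exists k a b f, ks = [k] /\
    lin_dia n k (Dia (Seq a b) f) (Dia a (Dia b f)) (fun x => x = Dia a (Dia b f)).

Definition rule_diatest (n : node) (ks : list node) : Prop :=
  exists k psi f, ks = [k] /\
    lin_dia n k (Dia (Test psi) f) f (fun x => x = psi \/ x = f).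

Definition branch_stat (s1 s2 : status) : status :=
  match s1, s2 with
  | Unsat, Unsat => Unsat
  | Open, _ | _, Open => Open
  | _, _ => Barred
  end.

Definition branch_combine (n k1 k2 : node) (u1 u2 : uevT) : Prop :=
  nStat n = branch_stat (nStat k1) (nStat k2) /\
  (nStat n <> Open -> forall c1 c2, nUev n c1 c2 = None) /\
  (nStat k1 = Open -> nStat k2 <> Open -> forall c1 c2, nUev n c1 c2 = u1 c1 c2) /\
  (nStat k2 = Open -> nStat k1 <> Open -> forall c1 c2, nUev n c1 c2 = u2 c1 c2) /\
  (nStat k1 = Open -> nStat k2 = Open ->
     forall c1 c2, nUev n c1 c2 = minb (u1 c1 c2) (u2 c1 c2)).

Definition br_std_child (n k : node) (pi f : form) : Prop :=
  seteqP (nG k) (fun x => x = f \/ inG n pi x) /\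
  nH k = nH n /\ nNx k = nNx n /\
  seteqP (nBD k) (fun x => In x (nBD n)) /\ seteqP (nBB k) (fun x => In x (nBB n)).

Definition rule_or (n : node) (ks : list node) : Prop :=
  exists k1 k2 f1 f2 u1 u2, ks = [k1; k2] /\
    In (Or f1 f2) (nG n) /\ nNx n = None /\
    br_std_child n k1 (Or f1 f2) f1 /\ br_std_child n k2 (Or f1 f2) f2 /\
    uev_std n (Or f1 f2) u1 (nUev k1) /\ uev_std n (Or f1 f2) u2 (nUev k2) /\
    branch_combine n k1 k2 u1 u2.

Definition rule_boxtest (n : node) (ks : list node) : Prop :=
  exists k1 k2 psi f u1 u2, ks = [k1; k2] /\
    In (Box (Test psi) f) (nG n) /\ nNx n = None /\
    br_std_child n k1 (Box (Test psi) f) (snot psi) /\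
    br_std_child n k2 (Box (Test psi) f) f /\
    uev_std n (Box (Test psi) f) u1 (nUev k1) /\
    uev_std n (Box (Test psi) f) u2 (nUev k2) /\
    branch_combine n k1 k2 u1 u2.

Definition br_dia_child (n k : node) (pi rho : form) (B : form -> Prop) : Prop :=
  seteqP (nG k) (fun x => x = rho \/ inG n pi x) /\
  nH k = nH n /\ nNx k = tst rho /\
  seteqP (nBD k) (blP rho B) /\ seteqP (nBB k) (fun x => In x (nBB n)).

Definition rule_diacup (n : node) (ks : list node) : Prop :=
  exists k1 k2 a1 a2 f u1 u2, ks = [k1; k2] /\
    In (Dia (Choice a1 a2) f) (nG n) /\ Nx_ok n (Dia (Choice a1 a2) f) /\
    br_dia_child n k1 (Dia (Choice a1 a2) f) (Dia a1 f) (fun x => In x (nBD n)) /\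
    br_dia_child n k2 (Dia (Choice a1 a2) f) (Dia a2 f) (fun x => In x (nBD n)) /\
    uev_rep n (Dia (Choice a1 a2) f) (Dia a1 f) u1 (nUev k1) /\
    uev_rep n (Dia (Choice a1 a2) f) (Dia a2 f) u2 (nUev k2) /\
    branch_combine n k1 k2 u1 u2.

Definition uev_star1 (n : node) (pi f : form) (u uc : uevT) : Prop :=
  forall c1 c2, (c1 = pi -> c2 = pi -> u c1 c2 = None) /\
                (c1 = pi -> c2 <> pi -> u c1 c2 = uc f c2) /\
                (inG n pi c1 -> u c1 c2 = uc c1 c2) /\
                (c1 <> pi -> ~ inG n pi c1 -> u c1 c2 = None).

Definition rule_diastar1 (n : node) (ks : list node) : Prop :=
  exists k1 k2 a f u1 u2, ks = [k1; k2] /\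
    In (Dia (Star a) f) (nG n) /\ Nx_ok n (Dia (Star a) f) /\
    ~ In (Dia (Star a) f) (nBD n) /\
    br_dia_child n k1 (Dia (Star a) f) f
      (fun x => x = Dia (Star a) f \/ In x (nBD n)) /\
    br_dia_child n k2 (Dia (Star a) f) (Dia a (Dia (Star a) f))
      (fun x => x = Dia (Star a) f \/ In x (nBD n)) /\
    uev_star1 n (Dia (Star a) f) f u1 (nUev k1) /\
    uev_rep n (Dia (Star a) f) (Dia a (Dia (Star a) f)) u2 (nUev k2) /\
    branch_combine n k1 k2 u1 u2.

Definition rule_id (n : node) (ks : list node) : Prop :=
  ks = [] /\ (exists q, In (Atom q) (nG n) /\ In (Neg (Atom q)) (nG n)) /\
  nStat n = Unsat /\ (forall c1 c2, nUev n c1 c2 = None).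

Definition rule_diastar2 (n : node) (ks : list node) : Prop :=
  ks = [] /\
  (exists a f, In (Dia (Star a) f) (nG n) /\ Nx_ok n (Dia (Star a) f) /\
               In (Dia (Star a) f) (nBD n)) /\
  nStat n = Barred /\ (forall c1 c2, nUev n c1 c2 = None).

Definition DeltaP (n : node) (a : nat) (psi : form) : Prop := In (Box (Aprog a) psi) (nG n).

Definition old_dia (n : node) (a : nat) (f : form) : Prop :=
  exists j, hentry (nH n) j f (fun x => x = f \/ DeltaP n a x).

Definition dia_child (n k : node) (a : nat) (f : form) : Prop :=
  seteqP (nG k) (fun x => x = f \/ DeltaP n a x) /\
  nH k = nH n ++ [(f, nG k)] /\ nNx k = tst f /\ nBD k = [] /\ nBB k = [].

Definition uev_cond (n : node) (c1 c2 : form) : Prop :=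
  nStat n = Open /\ is_stardia c2 = true /\ ppre c2 c1.

Definition rule_dia (n : node) (ks : list node) : Prop :=
  (forall x, In x (nG n) ->
     (exists a f, x = Dia (Aprog a) f) \/ (exists a f, x = Box (Aprog a) f) \/
     (exists q, x = Atom q) \/ (exists q, x = Neg (Atom q))) /\
  (forall q, In (Atom q) (nG n) -> ~ In (Neg (Atom q)) (nG n)) /\
  exists ds : list (nat * form),
    NoDup ds /\
    (forall a f, In (a, f) ds <-> (In (Dia (Aprog a) f) (nG n) /\ ~ old_dia n a f)) /\
    length ks = length ds /\
    Forall2 (fun d k => dia_child n k (fst d) (snd d)) ds ks /\
    (nStat n = Unsat <->
       ((exists k, In k ks /\ nStat k <> Open) \/
        (exists d k psi m, In (d, k) (combine ds ks) /\ is_stardia psi = true /\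
           ppre psi (snd d) /\ nUev k (snd d) psi = Some m /\ m > length (nH n)))) /\
    (nStat n <> Unsat -> nStat n = Open) /\
    (forall d k c2, In (d, k) (combine ds ks) ->
       uev_cond n (Dia (Aprog (fst d)) (snd d)) c2 ->
       nUev n (Dia (Aprog (fst d)) (snd d)) c2 = nUev k (snd d) c2) /\
    (forall a f, In (Dia (Aprog a) f) (nG n) -> old_dia n a f ->
       exists j, hentry (nH n) j f (fun x => x = f \/ DeltaP n a x) /\
         forall c2, uev_cond n (Dia (Aprog a) f) c2 ->
           nUev n (Dia (Aprog a) f) c2 = Some j) /\
    (forall c1 c2,
       ~ (uev_cond n c1 c2 /\ exists a f, c1 = Dia (Aprog a) f /\ In c1 (nG n)) ->
       nUev n c1 c2 = None).

Definition rule_step (n : node) (ks : list node) : Prop :=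
  rule_id n ks \/ rule_diastar2 n ks \/
  rule_and n ks \/ rule_boxcup n ks \/ rule_boxseq n ks \/ rule_boxstar n ks \/
  rule_diaseq n ks \/ rule_diatest n ks \/
  rule_or n ks \/ rule_boxtest n ks \/ rule_diacup n ks \/ rule_diastar1 n ks \/
  rule_dia n ks.

Definition same_content (n m : node) : Prop :=
  nG n = nG m /\ nH n = nH m /\ nNx n = nNx m /\ nBD n = nBD m /\ nBB n = nBB m.

Definition applicable (n : node) : Prop :=
  exists m ks, same_content n m /\ rule_step m ks.

(* Leaf = no rule applied (yet); Step = one rule applied, with its children
   (possibly none, for terminal rules and <> with n = 0). *)
Inductive tableau : Type :=
| Leaf : node -> tableau
| Step : node -> list tableau -> tableau.

Definition troot (t : tableau) : node :=
  match t with Leaf n => n | Step n _ => n end.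

Inductive valid_tableau : tableau -> Prop :=
| valid_leaf : forall n, valid_tableau (Leaf n)
| valid_step : forall n ts,
    rule_step n (map troot ts) -> Forall valid_tableau ts ->
    valid_tableau (Step n ts).

Inductive expanded : tableau -> Prop :=
| exp_leaf : forall n, ~ applicable n -> expanded (Leaf n)
| exp_step : forall n ts, Forall expanded ts -> expanded (Step n ts).

(* Main.v *)
Require Import Defs.
From Stdlib Require Import List Arith Lia Relations Classical ClassicalEpsilon.
Import ListNotations.

Inductive pc (M : model) : prog -> W M -> W M -> nat -> Prop :=
| pc_at : forall n w v, R M n w v -> pc M (Aprog n) w v 1
| pc_test : forall f w, holds M w f -> pc M (Test f) w w 0
| pc_seq : forall a b w u v n1 n2, pc M a w u n1 -> pc M b u v n2 -> pc M (Seq a b) w v (n1 + n2)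
| pc_ch1 : forall a b w v n, pc M a w v n -> pc M (Choice a b) w v n
| pc_ch2 : forall a b w v n, pc M b w v n -> pc M (Choice a b) w v n
| pc_st0 : forall a w, pc M (Star a) w w 1
| pc_stS : forall a w u v n1 n2, pc M a w u n1 -> pc M (Star a) u v n2 ->
    pc M (Star a) w v (S (n1 + n2)).

Definition isdia (f : form) : bool := match f with Dia _ _ => true | _ => false end.

Inductive Cst (M : model) : W M -> form -> nat -> Prop :=
| C_dia : forall a f w v n k, pc M a w v n -> Cst M v f k -> Cst M w (Dia a f) (n + k)
| C_nd : forall f w, isdia f = false -> holds M w f -> Cst M w f 0.

Lemma pc_rel M a w v n : pc M a w v n -> rel M a w v.
Proof.
  induction 1; simpl; eauto.
  - apply rt_refl.
  - eapply rt_trans; [apply rt_step; eauto | exact IHpc2].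
Qed.

Lemma rel_pc M a : forall w v, rel M a w v -> exists n, pc M a w v n.
Proof.
  induction a; simpl; intros w v H.
  - eexists; constructor; exact H.
  - destruct H as [-> H]; eexists; constructor; exact H.
  - destruct H as [u [H1 H2]]. destruct (IHa1 _ _ H1) as [n1 ?]; destruct (IHa2 _ _ H2) as [n2 ?].
    eexists; econstructor; eauto.
  - destruct H as [H|H]; [destruct (IHa1 _ _ H) | destruct (IHa2 _ _ H)]; eexists;
      [apply pc_ch1 | apply pc_ch2]; eauto.
  - apply clos_rt_rt1n in H. induction H.
    + eexists; constructor.
    + destruct (IHa _ _ H) as [n1 ?]. destruct IHclos_refl_trans_1n as [n2 ?].
      eexists; eapply pc_stS; eauto.
Qed.

Lemma Cst_holds M w f n : Cst M w f n -> holds M w f.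
Proof.
  induction 1; simpl; auto. exists v; split; auto. eapply pc_rel; eauto.
Qed.

Lemma holds_Cst M f : forall w, holds M w f -> exists n, Cst M w f n.
Proof.
  induction f; intros w H; try (eexists; apply C_nd; [reflexivity|exact H]).
  simpl in H. destruct H as [v [Hr Hv]]. destruct (rel_pc _ _ _ _ Hr) as [n1 ?].
  destruct (IHf _ Hv) as [k ?]. eexists; econstructor; eauto.
Qed.

Lemma Cst_dia_inv M w a f n : Cst M w (Dia a f) n ->
  exists v n1 k, pc M a w v n1 /\ Cst M v f k /\ n = n1 + k.
Proof.
  intro H; inversion H; subst.
  - eauto 10.
  - discriminate.
Qed.

Lemma wf_min (P : nat -> Prop) n : P n -> exists m, P m /\ forall k, P k -> m <= k.
Proof.
  induction n as [n IH] using lt_wf_ind; intro Pn.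
  destruct (classic (exists k, k < n /\ P k)) as [[k [Hk Pk]]|Hno].
  - exact (IH k Hk Pk).
  - exists n; split; auto. intros k Pk. destruct (le_lt_dec n k); auto.
    exfalso; apply Hno; eauto.
Qed.

Lemma min_cost M w f : holds M w f -> exists n0, Cst M w f n0 /\ forall n, Cst M w f n -> n0 <= n.
Proof.
  intro H. destruct (holds_Cst _ _ _ H) as [n Hn]. exact (wf_min _ n Hn).
Qed.

Definition Le M w x y := exists n1, Cst M w x n1 /\ forall n2, Cst M w y n2 -> n1 <= n2.
Definition Lt M w x y := exists n1, Cst M w x n1 /\ forall n2, Cst M w y n2 -> n1 < n2.

Lemma Le_Lt M w x y z : Le M w x y -> Lt M w y z -> Lt M w x z.
Proof.
  intros [n1 [H1 H1']] [n2 [H2 H2']]. exists n1; split; auto.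
  intros n3 H3. specialize (H1' _ H2). specialize (H2' _ H3). lia.
Qed.

Lemma Lt_Le M w x y : Lt M w x y -> Le M w x y.
Proof. intros [n [H H']]; exists n; split; auto. intros; specialize (H' _ H0); lia. Qed.

Lemma dec_seq M w a b f : holds M w (Dia (Seq a b) f) -> Le M w (Dia a (Dia b f)) (Dia (Seq a b) f).
Proof.
  intro H. destruct (min_cost _ _ _ H) as [n0 [H0 Hm]].
  destruct (Cst_dia_inv _ _ _ _ _ H0) as [v [n1 [k [Hp [Hk ->]]]]].
  inversion Hp; subst. exists (n0 + (n2 + k)); split.
  - econstructor; eauto. econstructor; eauto.
  - intros m Hm'. specialize (Hm _ Hm'). lia.
Qed.

Lemma dec_test M w p f : holds M w (Dia (Test p) f) -> holds M w p /\ Le M w f (Dia (Test p) f).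
Proof.
  intro H. destruct (min_cost _ _ _ H) as [n0 [H0 Hm]].
  destruct (Cst_dia_inv _ _ _ _ _ H0) as [v [n1 [k [Hp [Hk ->]]]]].
  inversion Hp; subst. split; [assumption|]. exists k; split; [assumption|].
  intros m Hm'; specialize (Hm _ Hm'); lia.
Qed.

Lemma dec_choice M w a b f : holds M w (Dia (Choice a b) f) ->
  Le M w (Dia a f) (Dia (Choice a b) f) \/ Le M w (Dia b f) (Dia (Choice a b) f).
Proof.
  intro H. destruct (min_cost _ _ _ H) as [n0 [H0 Hm]].
  destruct (Cst_dia_inv _ _ _ _ _ H0) as [v [n1 [k [Hp [Hk ->]]]]].
  inversion Hp; subst; [left|right]; exists (n1 + k); (split; [econstructor; eauto|]);
    try (intros m Hm'; specialize (Hm _ Hm'); lia).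
Qed.

Lemma dec_star M w a f : holds M w (Dia (Star a) f) ->
  Lt M w f (Dia (Star a) f) \/ Lt M w (Dia a (Dia (Star a) f)) (Dia (Star a) f).
Proof.
  intro H. destruct (min_cost _ _ _ H) as [n0 [H0 Hm]].
  destruct (Cst_dia_inv _ _ _ _ _ H0) as [v [n1 [k [Hp [Hk ->]]]]].
  inversion Hp; subst.
  - left. exists k; split; [assumption|]. intros m Hm'; specialize (Hm _ Hm'); lia.
  - right. match goal with
    | H1 : pc M a w ?u ?x1, H2 : pc M (Star a) ?u v ?x2 |- _ =>
        exists (x1 + (x2 + k)); split; [econstructor; [exact H1|econstructor; eauto]|] end.
    + intros m Hm'; specialize (Hm _ Hm'); lia.
Qed.

Lemma dec_at M w a f : holds M w (Dia (Aprog a) f) ->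
  exists v k, R M a w v /\ Cst M v f k /\ forall n2, Cst M w (Dia (Aprog a) f) n2 -> k < n2.
Proof.
  intro H. destruct (min_cost _ _ _ H) as [n0 [H0 Hm]].
  destruct (Cst_dia_inv _ _ _ _ _ H0) as [v [n1 [k [Hp [Hk ->]]]]].
  inversion Hp; subst. exists v, k; split; [assumption|]; split; [assumption|].
  intros m Hm'; specialize (Hm _ Hm'); lia.
Qed.

Scheme form_ind2 := Induction for form Sort Prop
  with prog_ind2 := Induction for prog Sort Prop.
Combined Scheme form_prog_ind from form_ind2, prog_ind2.

Lemma crt_mono {A} (R1 R2 : A -> A -> Prop) : (forall x y, R1 x y -> R2 x y) ->
  forall x y, clos_refl_trans A R1 x y -> clos_refl_trans A R2 x y.
Proof. intros H x y Hc; induction Hc; eauto using rt_step, rt_refl, rt_trans. Qed.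

Lemma nnf_sem M :
  (forall f, forall w, (holds M w (nnf f) <-> holds M w f) /\ (holds M w (nnfneg f) <-> ~ holds M w f)) /\
  (forall a, forall w v, rel M (nnfp a) w v <-> rel M a w v).
Proof.
  apply form_prog_ind; intros; simpl.
  - tauto.
  - destruct (H w) as [H1 H2]. split; [tauto|]. split; [tauto|]. intro; apply H1; apply NNPP; auto.
  - destruct (H w); destruct (H0 w). split; [tauto|]. split; [tauto|].
    intro Hn. destruct (classic (holds M w f)); [right; tauto|left; tauto].
  - destruct (H w); destruct (H0 w). split; [tauto|]. split; tauto.
  - split.
    + split; intros [v [Hr Hv]]; exists v; split; try apply H; try apply H0; auto.
    + split.
      * intros Hb [v [Hr Hv]]. destruct (H0 v) as [_ [H1 _]].
        apply (H1 (Hb v (proj2 (H w v) Hr))). exact Hv.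
      * intros Hn v Hr. destruct (H0 v) as [_ [_ H2]]. apply H2. intro Hv. apply Hn.
        exists v; split; [apply H; auto|auto].
  - split.
    + split; intros Hb v Hr; apply H0; apply Hb; apply H; auto.
    + split.
      * intros [v [Hr Hv]] Hb. destruct (H0 v) as [_ [H1 _]].
        apply (H1 Hv). apply Hb. apply H; auto.
      * intro Hn. apply NNPP; intro Hn2. apply Hn. intros v Hr. apply NNPP; intro Hv.
        apply Hn2. exists v; split; [apply H; auto|]. apply H0; auto.
  - tauto.
  - destruct (H w) as [H1 _]. tauto.
  - split; intros [u [Hu1 Hu2]]; exists u; split; try apply H; try apply H0; auto.
  - split; (intros [Hx|Hx]; [left; apply H | right; apply H0]; auto).
  - split; apply crt_mono; intros x y; apply H.
Qed.

Lemma nnf_is : (forall f, is_nnf (nnf f) /\ is_nnf (nnfneg f)) /\ (forall a, is_nnfp (nnfp a)).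
Proof.
  apply form_prog_ind; intros; simpl; try tauto.
Qed.

Lemma snot_sem M w p : holds M w (snot p) <-> ~ holds M w p.
Proof. unfold snot; simpl. apply (proj1 (nnf_sem M) p w). Qed.

Lemma snot_nnf p : is_nnf (snot p).
Proof. unfold snot; simpl. apply (proj1 nnf_is p). Qed.
Definition Good M (n : node) (w : W M) : Prop :=
  (forall x, In x (nG n) -> is_nnf x) /\ (forall x, In x (nG n) -> holds M w x) /\
  (forall x, nNx n = Some x -> In x (nG n) /\ is_nad x = true) /\
  (nNx n = None -> forall y, ~ In y (nBD n)) /\
  (forall x, nNx n = Some x -> forall b, In b (nBD n) -> Lt M w x b).

Definition Below M (D : list form) (phi : form) (w : W M) (c : form) : Prop :=
  exists u n1, (forall x, In x D -> holds M u x) /\ Cst M u phi n1 /\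
    forall n2, Cst M w c n2 -> n1 < n2.

Definition Xval M (H : list (form * list form)) (w : W M) (c : form) (o : option nat) : Prop :=
  o = None \/ exists v j phi D, o = Some v /\ v <= j /\ 1 <= j /\
    nth_error H (j-1) = Some (phi, D) /\ Below M D phi w c.

Definition UC M (n : node) (w : W M) : Prop :=
  forall c1 psi, In c1 (nG n) -> is_stardia psi = true -> ppre psi c1 ->
    Xval M (nH n) w c1 (nUev n c1 psi).

Definition CH M (ks : list node) : Prop :=
  forall k, In k ks -> forall w, Good M k w -> nStat k = Open /\ UC M k w.

Lemma Xval_Le M H w rho c o : Xval M H w rho o -> Le M w rho c -> Xval M H w c o.
Proof.
  intros [->|(v & j & phi & D & -> & H1 & H2 & H3 & (u & n1 & Hu & Hc & Hl))] [m [Hm Hm']];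
    [left; reflexivity|].
  right; exists v, j, phi, D; repeat split; auto.
  exists u, n1; repeat split; auto. intros n2 Hn2. specialize (Hm' _ Hn2). specialize (Hl _ Hm). lia.
Qed.

Lemma Xval_minb_l M H w c o1 o2 : Xval M H w c o1 -> Xval M H w c (minb o1 o2).
Proof.
  intros [->|(v & j & phi & D & -> & H1 & H2 & H3 & H4)]; [left; reflexivity|].
  destruct o2 as [v'|]; simpl; [|left; reflexivity].
  right; exists (Nat.min v v'), j, phi, D; repeat split; auto. lia.
Qed.

Lemma Xval_minb_r M H w c o1 o2 : Xval M H w c o2 -> Xval M H w c (minb o1 o2).
Proof.
  intros [->|(v & j & phi & D & -> & H1 & H2 & H3 & H4)].
  - destruct o1; left; reflexivity.
  - destruct o1 as [v'|]; simpl; [|left; reflexivity].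
    right; exists (Nat.min v' v), j, phi, D; repeat split; auto. lia.
Qed.

Lemma ppre_isdia psi c : is_stardia psi = true -> ppre psi c -> isdia c = true.
Proof.
  intros Hs Hp; induction Hp; auto. destruct psi; try discriminate; reflexivity.
Qed.

Lemma ppre_dia_inv psi a f : ppre psi (Dia a f) -> Dia a f <> psi -> ppre psi f.
Proof. intros H Hn; inversion H; subst; [congruence|assumption]. Qed.

Lemma bc_one1 n k1 k2 u1 u2 : branch_combine n k1 k2 u1 u2 -> nStat k1 = Open ->
  nStat n = Open /\ forall M H w c c1 c2, Xval M H w c (u1 c1 c2) -> Xval M H w c (nUev n c1 c2).
Proof.
  intros (Hs & Hnu & H1 & H2 & H12) Ho.
  assert (Hn : nStat n = Open) by (rewrite Hs, Ho; destruct (nStat k2); reflexivity).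
  split; auto. intros M H w c c1 c2 X.
  destruct (nStat k2) eqn:E2.
  - rewrite H1; auto; congruence.
  - rewrite H12; auto. apply Xval_minb_l; auto.
  - rewrite H1; auto; congruence.
Qed.

Lemma bc_one2 n k1 k2 u1 u2 : branch_combine n k1 k2 u1 u2 -> nStat k2 = Open ->
  nStat n = Open /\ forall M H w c c1 c2, Xval M H w c (u2 c1 c2) -> Xval M H w c (nUev n c1 c2).
Proof.
  intros (Hs & Hnu & H1 & H2 & H12) Ho.
  assert (Hn : nStat n = Open) by (rewrite Hs, Ho; destruct (nStat k1); reflexivity).
  split; auto. intros M H w c c1 c2 X.
  destruct (nStat k1) eqn:E1.
  - rewrite H2; auto; congruence.
  - rewrite H12; auto. apply Xval_minb_r; auto.
  - rewrite H2; auto; congruence.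
Qed.

Lemma tst_some rho x : tst rho = Some x -> x = rho /\ is_nad rho = true.
Proof. unfold tst; destruct (is_nad rho) eqn:E; intro H; inversion H; auto. Qed.

Lemma good_std M n k w : Good M n w -> nNx n = None -> nNx k = None ->
  (forall x, In x (nBD k) -> In x (nBD n)) ->
  (forall x, In x (nG k) -> is_nnf x /\ holds M w x) -> Good M k w.
Proof.
  intros (G1 & G2 & G3 & G4 & G5) HN HNk HB HG.
  repeat split.
  - intros x Hx; apply HG; auto.
  - intros x Hx; apply HG; auto.
  - rewrite HNk in H; discriminate.
  - rewrite HNk in H; discriminate.
  - intros _ y Hy. apply (G4 HN y). auto.
  - intros x Hx; rewrite HNk in Hx; discriminate.
Qed.

Lemma good_dia M k w rho (B : form -> Prop) :
  (forall x, In x (nG k) -> is_nnf x /\ holds M w x) -> In rho (nG k) -> nNx k = tst rho ->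
  seteqP (nBD k) (blP rho B) -> (forall b, B b -> Lt M w rho b) -> Good M k w.
Proof.
  intros HG Hr HN HB HL. repeat split.
  - intros x Hx; apply HG; auto.
  - intros x Hx; apply HG; auto.
  - rewrite HN in H; apply tst_some in H; destruct H; subst; auto.
  - rewrite HN in H; apply tst_some in H; destruct H; subst; auto.
  - intros HNo y Hy. apply HB in Hy. destruct Hy as [Hn _]. rewrite HN in HNo.
    unfold tst in HNo; rewrite Hn in HNo; discriminate.
  - intros x Hx b Hb. rewrite HN in Hx; apply tst_some in Hx; destruct Hx; subst.
    apply HB in Hb. destruct Hb; auto.
Qed.

Lemma bd_lt M n w pi rho : Good M n w -> Nx_ok n pi -> Le M w rho pi ->
  forall b, In b (nBD n) -> Lt M w rho b.
Proof.
  intros (G1 & G2 & G3 & G4 & G5) [HN|HN] HL b Hb.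
  - exfalso; exact (G4 HN b Hb).
  - eapply Le_Lt; eauto.
Qed.

Lemma bd_lt_star M n w pi rho : Good M n w -> Nx_ok n pi -> Lt M w rho pi ->
  forall b, b = pi \/ In b (nBD n) -> Lt M w rho b.
Proof.
  intros HG Hok HL b [->|Hb]; auto. eapply bd_lt; eauto. apply Lt_Le; auto.
Qed.

Lemma branch_one M n k pi rho (u : uevT) w :
  Good M k w -> nH k = nH n -> (forall x, inG n pi x -> In x (nG k)) ->
  (forall c1 c2, inG n pi c1 -> u c1 c2 = nUev k c1 c2) ->
  (forall psi, is_stardia psi = true -> ppre psi pi ->
     u pi psi = None \/ (u pi psi = nUev k rho psi /\ ppre psi rho /\ In rho (nG k) /\ Le M w rho pi)) ->
  (forall w, Good M k w -> nStat k = Open /\ UC M k w) ->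
  nStat k = Open /\ forall c1 psi, In c1 (nG n) -> is_stardia psi = true -> ppre psi c1 ->
    Xval M (nH n) w c1 (u c1 psi).
Proof.
  intros Hk HH Hin Hu Hpi IH. destruct (IH w Hk) as [Ho HU]. split; auto.
  intros c1 psi Hc Hs Hp. destruct (classic (c1 = pi)) as [->|Hne].
  - destruct (Hpi psi Hs Hp) as [->|(-> & Hpr & Hr & HL)]; [left; reflexivity|].
    rewrite <- HH. eapply Xval_Le; eauto.
  - assert (Hg : inG n pi c1) by (split; auto).
    rewrite (Hu _ _ Hg). rewrite <- HH. apply HU; auto.
Qed.
Lemma good_holds M n w x : Good M n w -> In x (nG n) -> holds M w x.
Proof. intros (_ & G2 & _) H; auto. Qed.
Lemma good_nnf M n w x : Good M n w -> In x (nG n) -> is_nnf x.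
Proof. intros (G1 & _) H; auto. Qed.

Lemma step_lin_std M n k pi new bb w : lin_std n k pi new bb -> isdia pi = false ->
  (forall x, new x -> is_nnf x /\ holds M w x) -> CH M [k] -> Good M n w ->
  nStat n = Open /\ UC M n w.
Proof.
  intros (Hin & HN & HG & HH & HNk & HB & HBB & Hst & Hu) Hd Hnew HC Hg.
  assert (Gk : Good M k w).
  { apply (good_std M n k w Hg HN); [congruence | intros x Hx; apply HB; auto |].
    intros x Hx; apply HG in Hx; destruct Hx as [Hx|[Hx _]]; auto.
    split; [eapply good_nnf|eapply good_holds]; eauto. }
  destruct (branch_one M n k pi pi (nUev n) w Gk HH) as [Ho HU].
  - intros x Hx; apply HG; right; auto.
  - intros c1 c2 Hc; apply (Hu c1 c2); auto.
  - intros psi Hs Hp. apply ppre_isdia in Hp; auto. congruence.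
  - apply HC; left; auto.
  - split; [congruence|]. intros c1 psi Hc Hs Hp; apply HU; auto.
Qed.

Lemma step_lin_dia M n k pi rho new w : lin_dia n k pi rho new -> new rho ->
  (forall x, new x -> is_nnf x /\ holds M w x) -> Le M w rho pi ->
  (forall psi, is_stardia psi = true -> ppre psi pi -> ppre psi rho) ->
  CH M [k] -> Good M n w -> nStat n = Open /\ UC M n w.
Proof.
  intros (Hin & Hok & HG & HH & HNk & HB & HBB & Hst & Hu) Hr Hnew HL Hpp HC Hg.
  assert (Gk : Good M k w).
  { apply (good_dia M k w rho (fun x => In x (nBD n))); auto.
    - intros x Hx; apply HG in Hx; destruct Hx as [Hx|[Hx _]]; auto.
      split; [eapply good_nnf|eapply good_holds]; eauto.
    - apply HG; left; auto.
    - eapply bd_lt; eauto. }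
  destruct (branch_one M n k pi rho (nUev n) w Gk HH) as [Ho HU].
  - intros x Hx; apply HG; right; auto.
  - intros c1 c2 Hc; apply (Hu c1 c2); auto.
  - intros psi Hs Hp. right. repeat split; auto.
    + apply (Hu pi psi); auto.
    + apply HG; left; auto.
  - apply HC; left; auto.
  - split; [congruence|]. intros c1 psi Hc Hs Hp; apply HU; auto.
Qed.

Lemma std_child_one M n k pi f u w : Good M n w -> nNx n = None -> isdia pi = false ->
  br_std_child n k pi f -> uev_std n pi u (nUev k) -> is_nnf f -> holds M w f ->
  (forall w, Good M k w -> nStat k = Open /\ UC M k w) ->
  nStat k = Open /\ forall c1 psi, In c1 (nG n) -> is_stardia psi = true -> ppre psi c1 ->
    Xval M (nH n) w c1 (u c1 psi).
Proof.
  intros Hg HN Hd (HG & HH & HNk & HB & HBB) Hu Hf1 Hf2 IH.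
  assert (Gk : Good M k w).
  { apply (good_std M n k w Hg HN); [congruence | intros x Hx; apply HB; auto |].
    intros x Hx; apply HG in Hx; destruct Hx as [->|[Hx _]]; auto.
    split; [eapply good_nnf|eapply good_holds]; eauto. }
  apply (branch_one M n k pi pi u w Gk HH); auto.
  - intros x Hx; apply HG; right; auto.
  - intros c1 c2 Hc; apply (Hu c1 c2); auto.
  - intros psi Hs Hp. apply ppre_isdia in Hp; auto. congruence.
Qed.

Lemma dia_child_one M n k pi rho B u w : Good M n w -> br_dia_child n k pi rho B ->
  is_nnf rho -> holds M w rho -> (forall b, B b -> Lt M w rho b) ->
  (forall c1 c2, inG n pi c1 -> u c1 c2 = nUev k c1 c2) ->
  (forall psi, is_stardia psi = true -> ppre psi pi ->
     u pi psi = None \/ (u pi psi = nUev k rho psi /\ ppre psi rho /\ Le M w rho pi)) ->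
  (forall w, Good M k w -> nStat k = Open /\ UC M k w) ->
  nStat k = Open /\ forall c1 psi, In c1 (nG n) -> is_stardia psi = true -> ppre psi c1 ->
    Xval M (nH n) w c1 (u c1 psi).
Proof.
  intros Hg (HG & HH & HNk & HB & HBB) Hr1 Hr2 HL Hu Hpi IH.
  assert (Gk : Good M k w).
  { apply (good_dia M k w rho B); auto.
    - intros x Hx; apply HG in Hx; destruct Hx as [->|[Hx _]]; auto.
      split; [eapply good_nnf|eapply good_holds]; eauto.
    - apply HG; left; auto. }
  apply (branch_one M n k pi rho u w Gk HH); auto.
  - intros x Hx; apply HG; right; auto.
  - intros psi Hs Hp. destruct (Hpi psi Hs Hp) as [H|(H1 & H2 & H3)]; [left; auto|right].
    repeat split; auto. apply HG; left; auto.
Qed.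

Lemma Le_holds M w x y : Le M w x y -> holds M w x.
Proof. intros [n [H _]]; eapply Cst_holds; eauto. Qed.
Lemma Lt_holds M w x y : Lt M w x y -> holds M w x.
Proof. intros [n [H _]]; eapply Cst_holds; eauto. Qed.

Ltac hs := simpl in *; tauto.

Lemma step_and M n ks w : rule_and n ks -> CH M ks -> Good M n w -> nStat n = Open /\ UC M n w.
Proof.
  intros (k & f & g & -> & Hl) HC Hg. eapply step_lin_std; eauto.
  destruct Hl as (Hin & _). pose proof (good_nnf _ _ _ _ Hg Hin). pose proof (good_holds _ _ _ _ Hg Hin).
  intros x [->| ->]; hs.
Qed.

Lemma step_boxcup M n ks w : rule_boxcup n ks -> CH M ks -> Good M n w -> nStat n = Open /\ UC M n w.
Proof.
  intros (k & a & b & f & -> & Hl) HC Hg. eapply step_lin_std; eauto.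
  destruct Hl as (Hin & _). pose proof (good_nnf _ _ _ _ Hg Hin). pose proof (good_holds _ _ _ _ Hg Hin).
  intros x [->| ->]; simpl in *; (split; [tauto|]); intros v Hv; auto.
Qed.

Lemma step_boxseq M n ks w : rule_boxseq n ks -> CH M ks -> Good M n w -> nStat n = Open /\ UC M n w.
Proof.
  intros (k & a & b & f & -> & Hl) HC Hg. eapply step_lin_std; eauto.
  destruct Hl as (Hin & _). pose proof (good_nnf _ _ _ _ Hg Hin) as N. pose proof (good_holds _ _ _ _ Hg Hin) as Hh.
  intros x ->; simpl in *; (split; [tauto|]). intros u Hu v Hv. apply Hh; eauto.
Qed.

Lemma step_boxstar M n ks w : rule_boxstar n ks -> CH M ks -> Good M n w -> nStat n = Open /\ UC M n w.
Proof.
  intros (k & a & f & -> & Hl) HC Hg. eapply step_lin_std; eauto.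
  destruct Hl as (Hin & _). pose proof (good_nnf _ _ _ _ Hg Hin) as N. pose proof (good_holds _ _ _ _ Hg Hin) as Hh.
  intros x [_ [->| ->]]; simpl in *; (split; [tauto|]).
  - apply Hh; apply rt_refl.
  - intros u Hu v Hv. apply Hh. eapply rt_trans; [apply rt_step|]; eauto.
Qed.

Lemma step_diaseq M n ks w : rule_diaseq n ks -> CH M ks -> Good M n w -> nStat n = Open /\ UC M n w.
Proof.
  intros (k & a & b & f & -> & Hl) HC Hg.
  assert (Hin := proj1 Hl).
  pose proof (good_nnf _ _ _ _ Hg Hin) as N. pose proof (good_holds _ _ _ _ Hg Hin) as Hh.
  pose proof (dec_seq _ _ _ _ _ Hh) as HL.
  apply (step_lin_dia M n k _ _ _ w Hl eq_refl); auto.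
  - intros x ->. split; [hs|]. eapply Le_holds; eauto.
  - intros psi Hs Hp. apply ppre_dia_inv in Hp; [|intro; subst; discriminate].
    repeat constructor; auto.
Qed.

Lemma step_diatest M n ks w : rule_diatest n ks -> CH M ks -> Good M n w -> nStat n = Open /\ UC M n w.
Proof.
  intros (k & p & f & -> & Hl) HC Hg.
  assert (Hin := proj1 Hl).
  pose proof (good_nnf _ _ _ _ Hg Hin) as N. pose proof (good_holds _ _ _ _ Hg Hin) as Hh.
  destruct (dec_test _ _ _ _ Hh) as [Hp HL].
  apply (step_lin_dia M n k _ _ _ w Hl (or_intror eq_refl)); auto.
  - intros x [->| ->]; (split; [hs|]); auto. eapply Le_holds; eauto.
  - intros psi Hs Hp'. apply ppre_dia_inv in Hp'; [|intro; subst; discriminate]. auto.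
Qed.

Lemma step_or M n ks w : rule_or n ks -> CH M ks -> Good M n w -> nStat n = Open /\ UC M n w.
Proof.
  intros (k1 & k2 & f1 & f2 & u1 & u2 & -> & Hin & HN & Hb1 & Hb2 & Hu1 & Hu2 & Hbc) HC Hg.
  pose proof (good_nnf _ _ _ _ Hg Hin) as N. pose proof (good_holds _ _ _ _ Hg Hin) as Hh.
  simpl in N, Hh. destruct Hh as [Hh|Hh].
  - destruct (std_child_one M n k1 (Or f1 f2) f1 u1 w Hg HN eq_refl Hb1 Hu1) as [Ho X]; try tauto.
    { apply HC; simpl; auto. }
    destruct (bc_one1 _ _ _ _ _ Hbc Ho) as [Hn T]. split; auto. intros c1 psi Hc Hs Hp; apply T; auto.
  - destruct (std_child_one M n k2 (Or f1 f2) f2 u2 w Hg HN eq_refl Hb2 Hu2) as [Ho X]; try tauto.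
    { apply HC; simpl; auto. }
    destruct (bc_one2 _ _ _ _ _ Hbc Ho) as [Hn T]. split; auto. intros c1 psi Hc Hs Hp; apply T; auto.
Qed.

Lemma step_boxtest M n ks w : rule_boxtest n ks -> CH M ks -> Good M n w -> nStat n = Open /\ UC M n w.
Proof.
  intros (k1 & k2 & p & f & u1 & u2 & -> & Hin & HN & Hb1 & Hb2 & Hu1 & Hu2 & Hbc) HC Hg.
  pose proof (good_nnf _ _ _ _ Hg Hin) as N. pose proof (good_holds _ _ _ _ Hg Hin) as Hh.
  simpl in N, Hh. destruct (classic (holds M w p)) as [Hp|Hp].
  - destruct (std_child_one M n k2 (Box (Test p) f) f u2 w Hg HN eq_refl Hb2 Hu2) as [Ho X]; try tauto.
    { apply Hh; auto. }
    { apply HC; simpl; auto. }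
    destruct (bc_one2 _ _ _ _ _ Hbc Ho) as [Hn T]. split; auto. intros c1 psi Hc Hs Hp'; apply T; auto.
  - destruct (std_child_one M n k1 (Box (Test p) f) (snot p) u1 w Hg HN eq_refl Hb1 Hu1) as [Ho X].
    { apply snot_nnf. }
    { apply snot_sem; auto. }
    { apply HC; simpl; auto. }
    destruct (bc_one1 _ _ _ _ _ Hbc Ho) as [Hn T]. split; auto. intros c1 psi Hc Hs Hp'; apply T; auto.
Qed.

Lemma step_diacup M n ks w : rule_diacup n ks -> CH M ks -> Good M n w -> nStat n = Open /\ UC M n w.
Proof.
  intros (k1 & k2 & a1 & a2 & f & u1 & u2 & -> & Hin & Hok & Hb1 & Hb2 & Hu1 & Hu2 & Hbc) HC Hg.
  pose proof (good_nnf _ _ _ _ Hg Hin) as N. pose proof (good_holds _ _ _ _ Hg Hin) as Hh.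
  destruct (dec_choice _ _ _ _ _ Hh) as [HL|HL].
  - destruct (dia_child_one M n k1 _ (Dia a1 f) _ u1 w Hg Hb1) as [Ho X].
    + hs.
    + eapply Le_holds; eauto.
    + eapply bd_lt; eauto.
    + intros c1 c2 Hc; apply (Hu1 c1 c2); auto.
    + intros psi Hs Hp. right. repeat split; auto.
      * apply (Hu1 _ psi); auto.
      * apply ppre_dia_inv in Hp; [|intro; subst; discriminate]. constructor; auto.
    + apply HC; simpl; auto.
    + destruct (bc_one1 _ _ _ _ _ Hbc Ho) as [Hn T]. split; auto. intros c1 psi Hc Hs Hp'; apply T; auto.
  - destruct (dia_child_one M n k2 _ (Dia a2 f) _ u2 w Hg Hb2) as [Ho X].
    + hs.
    + eapply Le_holds; eauto.
    + eapply bd_lt; eauto.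
    + intros c1 c2 Hc; apply (Hu2 c1 c2); auto.
    + intros psi Hs Hp. right. repeat split; auto.
      * apply (Hu2 _ psi); auto.
      * apply ppre_dia_inv in Hp; [|intro; subst; discriminate]. constructor; auto.
    + apply HC; simpl; auto.
    + destruct (bc_one2 _ _ _ _ _ Hbc Ho) as [Hn T]. split; auto. intros c1 psi Hc Hs Hp'; apply T; auto.
Qed.

Lemma step_diastar1 M n ks w : rule_diastar1 n ks -> CH M ks -> Good M n w -> nStat n = Open /\ UC M n w.
Proof.
  intros (k1 & k2 & a & f & u1 & u2 & -> & Hin & Hok & Hnb & Hb1 & Hb2 & Hu1 & Hu2 & Hbc) HC Hg.
  pose proof (good_nnf _ _ _ _ Hg Hin) as N. pose proof (good_holds _ _ _ _ Hg Hin) as Hh.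
  destruct (dec_star _ _ _ _ Hh) as [HL|HL].
  - destruct (dia_child_one M n k1 _ f _ u1 w Hg Hb1) as [Ho X].
    + hs.
    + eapply Lt_holds; eauto.
    + eapply bd_lt_star; eauto.
    + intros c1 c2 Hc; apply (Hu1 c1 c2); auto.
    + intros psi Hs Hp. destruct (classic (psi = Dia (Star a) f)) as [->|Hne].
      * left. destruct (Hu1 (Dia (Star a) f) (Dia (Star a) f)) as [H1 _]. apply H1; reflexivity.
      * right. repeat split.
        -- destruct (Hu1 (Dia (Star a) f) psi) as [_ [H1 _]]. apply H1; auto.
        -- apply ppre_dia_inv in Hp; auto.
        -- apply Lt_Le; auto.
    + apply HC; simpl; auto.
    + destruct (bc_one1 _ _ _ _ _ Hbc Ho) as [Hn T]. split; auto. intros c1 psi Hc Hs Hp'; apply T; auto.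
  - destruct (dia_child_one M n k2 _ (Dia a (Dia (Star a) f)) _ u2 w Hg Hb2) as [Ho X].
    + hs.
    + eapply Lt_holds; eauto.
    + eapply bd_lt_star; eauto.
    + intros c1 c2 Hc; apply (Hu2 c1 c2); auto.
    + intros psi Hs Hp. right. repeat split.
      * apply (Hu2 _ psi); auto.
      * constructor; auto.
      * apply Lt_Le; auto.
    + apply HC; simpl; auto.
    + destruct (bc_one2 _ _ _ _ _ Hbc Ho) as [Hn T]. split; auto. intros c1 psi Hc Hs Hp'; apply T; auto.
Qed.

Lemma step_id M n ks w : rule_id n ks -> Good M n w -> False.
Proof.
  intros (_ & (q & H1 & H2) & _) Hg.
  pose proof (good_holds _ _ _ _ Hg H1). pose proof (good_holds _ _ _ _ Hg H2). simpl in *; auto.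
Qed.

Lemma step_diastar2 M n ks w : rule_diastar2 n ks -> Good M n w -> False.
Proof.
  intros (_ & (a & f & Hin & [HN|HN] & Hb) & _) (G1 & G2 & G3 & G4 & G5).
  - exact (G4 HN _ Hb).
  - destruct (G5 _ HN _ Hb) as [m [Hm Hm']]. specialize (Hm' _ Hm). lia.
Qed.
Lemma Forall2_combine_in {A B} (P : A -> B -> Prop) l1 l2 x y :
  Forall2 P l1 l2 -> In (x, y) (combine l1 l2) -> P x y.
Proof.
  intro H; induction H; simpl; [tauto|]. intros [E|E]; [inversion E; subst; auto|auto].
Qed.

Lemma Forall2_in_l {A B} (P : A -> B -> Prop) l1 l2 x :
  Forall2 P l1 l2 -> In x l1 -> exists y, In (x, y) (combine l1 l2).
Proof.
  intro H; induction H; simpl; [tauto|]. intros [E|E]; [subst; eauto|].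
  destruct (IHForall2 E) as [z Hz]; eauto.
Qed.

Lemma Forall2_in_r {A B} (P : A -> B -> Prop) l1 l2 y :
  Forall2 P l1 l2 -> In y l2 -> exists x, In (x, y) (combine l1 l2).
Proof.
  intro H; induction H; simpl; [tauto|]. intros [E|E]; [subst; eauto|].
  destruct (IHForall2 E) as [z Hz]; eauto.
Qed.

Lemma dia_child_core M n k a f w : Good M n w -> In (Dia (Aprog a) f) (nG n) ->
  dia_child n k a f ->
  (forall w, Good M k w -> nStat k = Open /\ UC M k w) ->
  nStat k = Open /\ forall psi, is_stardia psi = true -> ppre psi f ->
   (nUev k f psi = None \/ exists v j phi D, nUev k f psi = Some v /\ v <= j /\ 1 <= j /\
      j <= length (nH n) /\ nth_error (nH n) (j-1) = Some (phi, D) /\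
      Below M D phi w (Dia (Aprog a) f)).
Proof.
  intros Hg Hin (HG & HH & HN & HB & HBB) IH.
  pose proof (good_nnf _ _ _ _ Hg Hin) as Nf. simpl in Nf.
  destruct (dec_at _ _ _ _ (good_holds _ _ _ _ Hg Hin)) as (v0 & k0 & Hr & Hc0 & Hlt).
  set (S := fun u => forall x, In x (nG k) -> holds M u x).
  assert (Sv0 : S v0).
  { intros x Hx. apply HG in Hx. destruct Hx as [->|Hx]; [eapply Cst_holds; eauto|].
    unfold DeltaP in Hx. pose proof (good_holds _ _ _ _ Hg Hx) as Hb. simpl in Hb. auto. }
  destruct (wf_min (fun m => exists u, S u /\ Cst M u f m) k0) as (ns & (us & Sus & Cus) & Hmin);
    [eauto|].
  assert (Hnsk : ns <= k0) by (apply Hmin; eauto).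
  assert (Gk : Good M k us).
  { repeat split.
    - intros x Hx. apply HG in Hx. destruct Hx as [->|Hx]; [tauto|].
      unfold DeltaP in Hx. pose proof (good_nnf _ _ _ _ Hg Hx) as Hb. simpl in Hb; tauto.
    - auto.
    - rewrite HN in H; apply tst_some in H; destruct H; subst; apply HG; auto.
    - rewrite HN in H; apply tst_some in H; destruct H; subst; auto.
    - intros _ y Hy; rewrite HB in Hy; auto.
    - intros x _ b Hb; rewrite HB in Hb; destruct Hb. }
  destruct (IH us Gk) as [Ho HU]. split; auto.
  intros psi Hs Hp.
  assert (Hf : In f (nG k)) by (apply HG; left; auto).
  destruct (HU f psi Hf Hs Hp) as [E|(v & j & phi & D & E & H1 & H2 & H3 & Hbel)]; [left; auto|right].
  rewrite HH in H3.
  destruct (lt_dec (j-1) (length (nH n))) as [Hl|Hl].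
  - rewrite nth_error_app1 in H3 by auto.
    exists v, j, phi, D; repeat split; auto; try lia.
    destruct Hbel as (u & n1 & Hu & Hc & Hl1). exists u, n1; repeat split; auto.
    intros n2 Hn2. specialize (Hl1 _ Cus). specialize (Hlt _ Hn2). lia.
  - rewrite nth_error_app2 in H3 by lia.
    destruct (j - 1 - length (nH n)) eqn:Ej; simpl in H3; [|destruct n0; discriminate].
    inversion H3; subst.
    destruct Hbel as (u & n1 & Hu & Hc & Hl1).
    specialize (Hl1 _ Cus). assert (ns <= n1) by (apply Hmin; eauto). lia.
Qed.

Lemma step_dia M n ks w : rule_dia n ks -> CH M ks -> Good M n w -> nStat n = Open /\ UC M n w.
Proof.
  intros (Hshape & Hncl & ds & Hnd & Hds & Hlen & HF & Hst & Hst2 & Hu1 & Hu2 & Hu3) HC Hg.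
  assert (Hop : nStat n = Open).
  { apply Hst2. intro HU. apply Hst in HU.
    destruct HU as [[k [Hk Hnk]] | (d & k & psi & m & Hc & Hps & Hpp & Hk & Hm)].
    - destruct (Forall2_in_r _ _ _ _ HF Hk) as [[a f] Hc].
      pose proof (Forall2_combine_in _ _ _ _ _ HF Hc) as Hdc. simpl in Hdc.
      apply in_combine_l in Hc. apply Hds in Hc. destruct Hc as [Hin _].
      destruct (dia_child_core M n k a f w Hg Hin Hdc) as [Ho _]; [|congruence].
      apply HC; auto.
    - destruct d as [a f]. simpl in *.
      pose proof (Forall2_combine_in _ _ _ _ _ HF Hc) as Hdc. simpl in Hdc.
      assert (Hk' : In k ks) by (eapply in_combine_r; eauto).
      apply in_combine_l in Hc. apply Hds in Hc. destruct Hc as [Hin _].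
      destruct (dia_child_core M n k a f w Hg Hin Hdc) as [_ X]; [apply HC; auto|].
      destruct (X psi Hps Hpp) as [E|(v & j & phi & D & E & H1 & H2 & H3 & _)]; congruence || (
      rewrite Hk in E; inversion E; subst; lia). }
  split; auto.
  intros c1 psi Hc Hs Hp.
  pose proof (ppre_isdia _ _ Hs Hp) as Hd.
  destruct (Hshape c1 Hc) as [(a & f & ->)|[(a & f & ->)|[(q & ->)|(q & ->)]]]; try discriminate.
  assert (Hpf : ppre psi f).
  { apply ppre_dia_inv in Hp; auto. intro E; subst; discriminate. }
  destruct (classic (old_dia n a f)) as [Hold|Hnew].
  - destruct (Hu2 a f Hc Hold) as (j & (Hj1 & D & HD & HDs) & Hj).
    rewrite Hj by (repeat split; auto).
    right. exists j, j, f, D; repeat split; auto.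
    destruct (dec_at _ _ _ _ (good_holds _ _ _ _ Hg Hc)) as (v0 & k0 & Hr & Hc0 & Hlt).
    exists v0, k0; repeat split; auto.
    intros x Hx. apply HDs in Hx. destruct Hx as [->|Hx]; [eapply Cst_holds; eauto|].
    pose proof (good_holds _ _ _ _ Hg Hx) as Hb. simpl in Hb. auto.
  - assert (Hin : In (a, f) ds) by (apply Hds; auto).
    destruct (Forall2_in_l _ _ _ _ HF Hin) as [k Hck].
    pose proof (Forall2_combine_in _ _ _ _ _ HF Hck) as Hdc. simpl in Hdc.
    pose proof (Hu1 (a, f) k psi Hck) as E0. simpl in E0.
    rewrite E0 by (repeat split; auto).
    destruct (dia_child_core M n k a f w Hg Hc Hdc) as [_ X].
    { apply HC. eapply in_combine_r; eauto. }
    destruct (X psi Hs Hpf) as [E|(v & j & phi & D & E & H1 & H2 & H3 & H4 & H5)]; [left; auto|].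
    right; exists v, j, phi, D; repeat split; auto.
Qed.
Definition rm (pi : form) (l : list form) : list form :=
  filter (fun x => if excluded_middle_informative (x = pi) then false else true) l.

Lemma In_rm x pi l : In x (rm pi l) <-> In x l /\ x <> pi.
Proof.
  unfold rm. rewrite filter_In. destruct (excluded_middle_informative (x = pi)); intuition congruence.
Qed.

Definition sc (n : node) (s : status) (u : uevT) : node :=
  mkNode (nG n) (nH n) (nNx n) (nBD n) (nBB n) s u.

Lemma sc_same n s u : same_content n (sc n s u).
Proof. repeat split. Qed.

Definition bdl (rho : form) (B : list form) : list form := if is_nad rho then B else [].

Lemma bdl_seteq rho (B : list form) (Bp : form -> Prop) :
  seteqP B Bp -> seteqP (bdl rho B) (blP rho Bp).
Proof.
  intros HB x; unfold bdl, blP. destruct (is_nad rho); simpl.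
  - specialize (HB x); intuition.
  - intuition discriminate.
Qed.

Lemma seteq_refl (l : list form) : seteqP l (fun x => In x l).
Proof. intro; tauto. Qed.

Lemma seteq_new1 n pi rho : seteqP (rho :: rm pi (nG n)) (fun x => x = rho \/ inG n pi x).
Proof. intro x; simpl; rewrite In_rm; unfold inG; intuition congruence. Qed.

Lemma seteq_new2 n pi f g : seteqP (f :: g :: rm pi (nG n)) (fun x => (x = f \/ x = g) \/ inG n pi x).
Proof. intro x; simpl; rewrite In_rm; unfold inG; intuition congruence. Qed.

Lemma bc_bot n k1 k2 : nStat n = Open -> (forall c1 c2, nUev n c1 c2 = None) ->
  nStat k1 = Open -> nStat k2 = Open -> branch_combine n k1 k2 uev_bot uev_bot.
Proof.
  intros H1 H2 H3 H4. unfold branch_combine. rewrite H1, H3, H4. repeat split; auto; congruence.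
Qed.

Ltac uevs := unfold uev_std, uev_rep, uev_star1; intros; repeat split; reflexivity.

Definition kn (G : list form) (H : list (form * list form)) Nx BD BB : node :=
  mkNode G H Nx BD BB Open uev_bot.

Lemma app_lin_std n pi (new bb : form -> Prop) Gk BBk (P : node -> list node -> Prop) :
  In pi (nG n) -> nNx n = None -> seteqP Gk (fun x => new x \/ inG n pi x) -> seteqP BBk bb ->
  (forall k, lin_std (sc n Open uev_bot) k pi new bb -> P (sc n Open uev_bot) [k]) -> (forall m ks, P m ks -> rule_step m ks) ->
  applicable n.
Proof.
  intros Hin HN HG HB HP HR. exists (sc n Open uev_bot), [kn Gk (nH n) None (nBD n) BBk].
  split; [apply sc_same|]. apply HR, HP.
  unfold lin_std; simpl. repeat split; auto; try apply HG; try apply HB; try uevs.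
  all: try (rewrite HN; reflexivity).
Qed.

Lemma app_lin_dia n pi rho (new : form -> Prop) Gk (P : node -> list node -> Prop) :
  In pi (nG n) -> Nx_ok n pi -> seteqP Gk (fun x => new x \/ inG n pi x) ->
  (forall k, lin_dia (sc n Open uev_bot) k pi rho new -> P (sc n Open uev_bot) [k]) -> (forall m ks, P m ks -> rule_step m ks) ->
  applicable n.
Proof.
  intros Hin HN HG HP HR. exists (sc n Open uev_bot), [kn Gk (nH n) (tst rho) (bdl rho (nBD n)) (nBB n)].
  split; [apply sc_same|]. apply HR, HP.
  unfold lin_dia; simpl.
  refine (conj Hin (conj HN (conj HG (conj eq_refl (conj eq_refl (conj _ (conj (seteq_refl _) (conj eq_refl _)))))))).
  - apply bdl_seteq, seteq_refl.
  - uevs.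
Qed.
Ltac splits := repeat match goal with |- _ /\ _ => split end.
Ltac rs := unfold rule_step; tauto.
Ltac sn := intro x; simpl; rewrite In_rm; unfold inG; simpl; intuition congruence.

Lemma app_and n f g : In (And f g) (nG n) -> nNx n = None -> applicable n.
Proof.
  intros Hin HN.
  apply (app_lin_std n (And f g) (fun x => x = f \/ x = g) (fun x => In x (nBB n))
    (f :: g :: rm (And f g) (nG n)) (nBB n) rule_and); auto.
  - apply seteq_new2.
  - apply seteq_refl.
  - intros k H; exists k, f, g; split; auto.
  - intros; rs.
Qed.

Lemma app_boxcup n a b f : In (Box (Choice a b) f) (nG n) -> nNx n = None -> applicable n.
Proof.
  intros Hin HN.
  apply (app_lin_std n (Box (Choice a b) f) (fun x => x = Box a f \/ x = Box b f) (fun x => In x (nBB n))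
    (Box a f :: Box b f :: rm (Box (Choice a b) f) (nG n)) (nBB n) rule_boxcup); auto.
  - apply seteq_new2.
  - apply seteq_refl.
  - intros k H; exists k, a, b, f; split; auto.
  - intros; rs.
Qed.

Lemma app_boxseq n a b f : In (Box (Seq a b) f) (nG n) -> nNx n = None -> applicable n.
Proof.
  intros Hin HN.
  apply (app_lin_std n (Box (Seq a b) f) (fun x => x = Box a (Box b f)) (fun x => In x (nBB n))
    (Box a (Box b f) :: rm (Box (Seq a b) f) (nG n)) (nBB n) rule_boxseq); auto.
  - apply seteq_new1.
  - apply seteq_refl.
  - intros k H; exists k, a, b, f; split; auto.
  - intros; rs.
Qed.

Lemma app_boxstar n a f : In (Box (Star a) f) (nG n) -> nNx n = None -> applicable n.
Proof.
  intros Hin HN. set (pi := Box (Star a) f).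
  destruct (classic (In pi (nBB n))) as [Hb|Hb].
  - apply (app_lin_std n pi (fun x => ~ In pi (nBB n) /\ (x = f \/ x = Box a (Box (Star a) f)))
      (fun x => x = pi \/ In x (nBB n)) (rm pi (nG n)) (pi :: nBB n) rule_boxstar); auto.
    + intro x; rewrite In_rm; unfold inG; tauto.
    + intro x; simpl; intuition congruence.
    + intros k H; exists k, a, f; split; auto.
    + intros; rs.
  - apply (app_lin_std n pi (fun x => ~ In pi (nBB n) /\ (x = f \/ x = Box a (Box (Star a) f)))
      (fun x => x = pi \/ In x (nBB n)) (f :: Box a (Box (Star a) f) :: rm pi (nG n)) (pi :: nBB n) rule_boxstar); auto.
    + intro x; simpl; rewrite In_rm; unfold inG; intuition congruence.
    + intro x; simpl; intuition congruence.
    + intros k H; exists k, a, f; split; auto.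
    + intros; rs.
Qed.

Lemma app_diaseq n a b f : In (Dia (Seq a b) f) (nG n) -> Nx_ok n (Dia (Seq a b) f) -> applicable n.
Proof.
  intros Hin HN.
  apply (app_lin_dia n (Dia (Seq a b) f) (Dia a (Dia b f)) (fun x => x = Dia a (Dia b f))
    (Dia a (Dia b f) :: rm (Dia (Seq a b) f) (nG n)) rule_diaseq); auto.
  - apply seteq_new1.
  - intros k H; exists k, a, b, f; split; auto.
  - intros; rs.
Qed.

Lemma app_diatest n p f : In (Dia (Test p) f) (nG n) -> Nx_ok n (Dia (Test p) f) -> applicable n.
Proof.
  intros Hin HN.
  apply (app_lin_dia n (Dia (Test p) f) f (fun x => x = p \/ x = f)
    (p :: f :: rm (Dia (Test p) f) (nG n)) rule_diatest); auto.
  - apply seteq_new2.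
  - intros k H; exists k, p, f; split; auto.
  - intros; rs.
Qed.

Lemma app_or n f1 f2 : In (Or f1 f2) (nG n) -> nNx n = None -> applicable n.
Proof.
  intros Hin HN. set (pi := Or f1 f2).
  exists (sc n Open uev_bot), [kn (f1 :: rm pi (nG n)) (nH n) (nNx n) (nBD n) (nBB n);
                               kn (f2 :: rm pi (nG n)) (nH n) (nNx n) (nBD n) (nBB n)].
  split; [apply sc_same|]. unfold rule_step; do 8 right; left.
  exists (kn (f1 :: rm pi (nG n)) (nH n) (nNx n) (nBD n) (nBB n)),
         (kn (f2 :: rm pi (nG n)) (nH n) (nNx n) (nBD n) (nBB n)), f1, f2, uev_bot, uev_bot.
  unfold br_std_child, br_dia_child; splits; auto; try sn; try apply seteq_refl; try uevs.
  all: try (apply bc_bot; reflexivity).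
Qed.

Lemma app_boxtest n p f : In (Box (Test p) f) (nG n) -> nNx n = None -> applicable n.
Proof.
  intros Hin HN. set (pi := Box (Test p) f).
  exists (sc n Open uev_bot), [kn (snot p :: rm pi (nG n)) (nH n) (nNx n) (nBD n) (nBB n);
                               kn (f :: rm pi (nG n)) (nH n) (nNx n) (nBD n) (nBB n)].
  split; [apply sc_same|]. unfold rule_step; do 9 right; left.
  exists (kn (snot p :: rm pi (nG n)) (nH n) (nNx n) (nBD n) (nBB n)),
         (kn (f :: rm pi (nG n)) (nH n) (nNx n) (nBD n) (nBB n)), p, f, uev_bot, uev_bot.
  unfold br_std_child, br_dia_child; splits; auto; try sn; try apply seteq_refl; try uevs.
  all: try (apply bc_bot; reflexivity).
Qed.

Lemma app_diacup n a1 a2 f : In (Dia (Choice a1 a2) f) (nG n) -> Nx_ok n (Dia (Choice a1 a2) f) ->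
  applicable n.
Proof.
  intros Hin HN. set (pi := Dia (Choice a1 a2) f).
  set (k1 := kn (Dia a1 f :: rm pi (nG n)) (nH n) (tst (Dia a1 f)) (bdl (Dia a1 f) (nBD n)) (nBB n)).
  set (k2 := kn (Dia a2 f :: rm pi (nG n)) (nH n) (tst (Dia a2 f)) (bdl (Dia a2 f) (nBD n)) (nBB n)).
  exists (sc n Open uev_bot), [k1; k2].
  split; [apply sc_same|]. unfold rule_step; do 10 right; left.
  exists k1, k2, a1, a2, f, uev_bot, uev_bot. subst k1 k2 pi.
  unfold br_std_child, br_dia_child; splits; auto; try sn; try apply seteq_refl; try uevs;
    try (apply bdl_seteq, seteq_refl).
  all: try (apply bc_bot; reflexivity).
Qed.

Lemma app_diastar1 n a f : In (Dia (Star a) f) (nG n) -> Nx_ok n (Dia (Star a) f) ->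
  ~ In (Dia (Star a) f) (nBD n) -> applicable n.
Proof.
  intros Hin HN Hb. set (pi := Dia (Star a) f).
  set (k1 := kn (f :: rm pi (nG n)) (nH n) (tst f) (bdl f (pi :: nBD n)) (nBB n)).
  set (k2 := kn (Dia a pi :: rm pi (nG n)) (nH n) (tst (Dia a pi)) (bdl (Dia a pi) (pi :: nBD n)) (nBB n)).
  assert (HS : seteqP (pi :: nBD n) (fun x => x = pi \/ In x (nBD n))).
  { intro x; simpl; intuition congruence. }
  exists (sc n Open uev_bot), [k1; k2].
  split; [apply sc_same|]. unfold rule_step; do 11 right; left.
  exists k1, k2, a, f, uev_bot, uev_bot. subst k1 k2 pi.
  unfold br_std_child, br_dia_child; splits; auto; try sn; try apply seteq_refl; try uevs;
    try (apply bdl_seteq; exact HS).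
  all: try (apply bc_bot; reflexivity).
Qed.

Lemma app_diastar2 n a f : In (Dia (Star a) f) (nG n) -> Nx_ok n (Dia (Star a) f) ->
  In (Dia (Star a) f) (nBD n) -> applicable n.
Proof.
  intros Hin HN Hb. exists (sc n Barred uev_bot), [].
  split; [apply sc_same|]. unfold rule_step; right; left.
  split; auto. split; eauto.
Qed.

Lemma app_id n q : In (Atom q) (nG n) -> In (Neg (Atom q)) (nG n) -> applicable n.
Proof.
  intros H1 H2. exists (sc n Unsat uev_bot), [].
  split; [apply sc_same|]. unfold rule_step; left.
  split; auto. split; eauto.
Qed.
Definition deqpf : forall x y : nat * form, {x = y} + {x <> y} :=
  fun x y => excluded_middle_informative (x = y).

Definition newds (n : node) : list (nat * form) :=
  nodup deqpf (flat_map (fun x => match x with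
    | Dia (Aprog a) f => if excluded_middle_informative (old_dia n a f) then [] else [(a, f)]
    | _ => [] end) (nG n)).

Definition boxes (a : nat) (G : list form) : list form :=
  flat_map (fun x => match x with
    | Box (Aprog b) g => if Nat.eqb b a then [g] else []
    | _ => [] end) G.

Definition dchild (n : node) (d : nat * form) : node :=
  kn (snd d :: boxes (fst d) (nG n)) (nH n ++ [(snd d, snd d :: boxes (fst d) (nG n))])
     (tst (snd d)) [] [].

Definition udia (n : node) : uevT := fun c1 c2 =>
  match c1 with
  | Dia (Aprog a) f =>
      if excluded_middle_informative (In (Dia (Aprog a) f) (nG n) /\ is_stardia c2 = true /\
                                      ppre c2 (Dia (Aprog a) f) /\ old_dia n a f)
      then Some (epsilon (inhabits 0) (fun j => hentry (nH n) j f (fun x => x = f \/ DeltaP n a x)))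
      else None
  | _ => None
  end.

Lemma In_boxes y a G : In y (boxes a G) <-> In (Box (Aprog a) y) G.
Proof.
  unfold boxes; rewrite in_flat_map; split.
  - intros [x [Hx Hy]]. destruct x; try (simpl in Hy; tauto). destruct p; try (simpl in Hy; tauto).
    destruct (Nat.eqb_spec n a); simpl in Hy; [|tauto]. destruct Hy as [<-|[]]; subst; auto.
  - intro H; exists (Box (Aprog a) y); split; auto. simpl; rewrite Nat.eqb_refl; left; auto.
Qed.

Lemma In_newds n a f : In (a, f) (newds n) <-> In (Dia (Aprog a) f) (nG n) /\ ~ old_dia n a f.
Proof.
  unfold newds; rewrite nodup_In, in_flat_map; split.
  - intros [x [Hx Hy]]. destruct x; try (simpl in Hy; tauto). destruct p; try (simpl in Hy; tauto).
    destruct (excluded_middle_informative (old_dia n n0 x)); simpl in Hy; [tauto|].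
    destruct Hy as [E|[]]; inversion E; subst; auto.
  - intros [H1 H2]; exists (Dia (Aprog a) f); split; auto. simpl.
    destruct (excluded_middle_informative (old_dia n a f)); [tauto|left; auto].
Qed.

Lemma Forall2_map_r {A B} (P : A -> B -> Prop) (g : A -> B) l :
  (forall x, P x (g x)) -> Forall2 P l (map g l).
Proof. intro H; induction l; simpl; constructor; auto. Qed.

Lemma app_dia n :
  (forall x, In x (nG n) ->
     (exists a f, x = Dia (Aprog a) f) \/ (exists a f, x = Box (Aprog a) f) \/
     (exists q, x = Atom q) \/ (exists q, x = Neg (Atom q))) ->
  (forall q, In (Atom q) (nG n) -> ~ In (Neg (Atom q)) (nG n)) ->
  applicable n.
Proof.
  intros Hsh Hcl.
  exists (sc n Open (udia n)), (map (dchild n) (newds n)). split; [apply sc_same|].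
  unfold rule_step; do 12 right. unfold rule_dia.
  split; [exact Hsh|]. split; [exact Hcl|]. exists (newds n).
  split; [apply NoDup_nodup|].
  split; [intros a f; exact (In_newds n a f)|].
  split; [apply length_map|].
  split.
  { apply Forall2_map_r. intros [a f]. unfold dia_child; simpl.
    repeat split; try reflexivity.
    - intros [->|Hx]; [left; auto|right; apply In_boxes; auto].
    - intros [->|Hx]; [left; auto|right; apply In_boxes; auto]. }
  split.
  { split; [intro H; discriminate H|].
    intros [[k [Hk Hne]] | (d & k & psi & mm & Hc & _ & _ & Hk & _)].
    - apply in_map_iff in Hk. destruct Hk as [d [<- _]]. exfalso; apply Hne; reflexivity.
    - apply in_combine_r, in_map_iff in Hc. destruct Hc as [d' [<- _]]. discriminate Hk. }
  split; [intros _; reflexivity|].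
  split.
  { intros [a f] k c2 Hc Hu. pose proof Hc as Hc'.
    apply in_combine_r, in_map_iff in Hc'. destruct Hc' as [d' [<- _]]. simpl.
    apply in_combine_l, In_newds in Hc. destruct Hc as [_ Hno].
    unfold udia. destruct (excluded_middle_informative _) as [(_ & _ & _ & Ho)|]; [tauto|reflexivity]. }
  split.
  { intros a f Hin Hold. exists (epsilon (inhabits 0) (fun j => hentry (nH n) j f (fun x => x = f \/ DeltaP n a x))).
    split.
    - apply (epsilon_spec (inhabits 0) (fun j => hentry (nH n) j f (fun x => x = f \/ DeltaP n a x))). exact Hold.
    - intros c2 (_ & Hs & Hp). simpl. unfold udia.
      destruct (excluded_middle_informative _) as [_|Hno]; [reflexivity|].
      exfalso; apply Hno; repeat split; auto. }
  { intros c1 c2 Hno. simpl. unfold udia. destruct c1; try reflexivity. destruct p; try reflexivity.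
    destruct (excluded_middle_informative _) as [(Hin & Hs & Hp & _)|]; [|reflexivity].
    exfalso; apply Hno. split; [repeat split; auto|]. eauto. }
Qed.

Definition complex (x : form) : bool :=
  match x with
  | And _ _ | Or _ _ => true
  | Box (Aprog _) _ => false | Box _ _ => true
  | Dia (Aprog _) _ => false | Dia _ _ => true
  | _ => false end.

Lemma good_app M n w : Good M n w -> applicable n.
Proof.
  intros (G1 & G2 & G3 & G4 & G5).
  destruct (nNx n) as [x|] eqn:HN.
  - destruct (G3 x eq_refl) as [Hin Hnad].
    assert (Hok : Nx_ok n x) by (right; auto).
    destruct x; try discriminate Hnad. destruct p; try discriminate Hnad.
    + apply (app_diatest n f x); auto.
    + apply (app_diaseq n p1 p2 x); auto.
    + apply (app_diacup n p1 p2 x); auto.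
    + destruct (classic (In (Dia (Star p) x) (nBD n))).
      * apply (app_diastar2 n p x); auto.
      * apply (app_diastar1 n p x); auto.
  - assert (Hok : forall pi, Nx_ok n pi) by (left; auto).
    destruct (classic (exists x, In x (nG n) /\ complex x = true)) as [[x [Hin Hc]]|Hno].
    + destruct x; try discriminate Hc.
      * apply (app_and n x1 x2); auto.
      * apply (app_or n x1 x2); auto.
      * destruct p; try discriminate Hc.
        -- apply (app_diatest n f x); auto.
        -- apply (app_diaseq n p1 p2 x); auto.
        -- apply (app_diacup n p1 p2 x); auto.
        -- apply (app_diastar1 n p x); auto; apply G4; auto.
      * destruct p; try discriminate Hc.
        -- apply (app_boxtest n f x); auto.
        -- apply (app_boxseq n p1 p2 x); auto.
        -- apply (app_boxcup n p1 p2 x); auto.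
        -- apply (app_boxstar n p x); auto.
    + apply app_dia.
      * intros x Hin. assert (Hc : complex x = false) by (destruct (complex x) eqn:E; auto; exfalso; eauto).
        pose proof (G1 x Hin) as Hn.
        destruct x; simpl in Hc; try discriminate Hc.
        -- right; right; left; eauto.
        -- destruct x; simpl in Hn; try tauto. right; right; right; eauto.
        -- destruct p; try discriminate Hc. left; eauto.
        -- destruct p; try discriminate Hc. right; left; eauto.
      * intros q H1 H2. pose proof (G2 _ H1). pose proof (G2 _ H2). simpl in *; auto.
Qed.

Fixpoint tab_ind' (P : tableau -> Prop) (HL : forall n, P (Leaf n))
  (HS : forall n ts, Forall P ts -> P (Step n ts)) (t : tableau) : P t :=
  match t with
  | Leaf n => HL n
  | Step n ts => HS n ts ((fix F (l : list tableau) : Forall P l :=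
       match l with
       | nil => Forall_nil _
       | t :: l' => Forall_cons _ (tab_ind' P HL HS t) (F l')
       end) ts)
  end.

Lemma main M t : valid_tableau t -> expanded t ->
  forall w, Good M (troot t) w -> nStat (troot t) = Open /\ UC M (troot t) w.
Proof.
  induction t as [n|n ts IH] using tab_ind'; intros Hv He w Hg.
  - inversion He; subst. exfalso. apply H0. eapply good_app; eauto.
  - inversion Hv; subst. inversion He; subst. simpl in *.
    assert (HC : CH M (map troot ts)).
    { intros k Hk w' Hg'. apply in_map_iff in Hk. destruct Hk as [t [<- Ht]].
      rewrite Forall_forall in IH, H2, H0. apply IH; auto. }
    destruct H1 as [H|[H|[H|[H|[H|[H|[H|[H|[H|[H|[H|[H|H]]]]]]]]]]]].
    + exfalso; eapply step_id; eauto.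
    + exfalso; eapply step_diastar2; eauto.
    + eapply step_and; eauto.
    + eapply step_boxcup; eauto.
    + eapply step_boxseq; eauto.
    + eapply step_boxstar; eauto.
    + eapply step_diaseq; eauto.
    + eapply step_diatest; eauto.
    + eapply step_or; eauto.
    + eapply step_boxtest; eauto.
    + eapply step_diacup; eauto.
    + eapply step_diastar1; eauto.
    + eapply step_dia; eauto.
Qed.

Theorem theorem4p8 (phi : form) (T : tableau) :
  is_nnf phi ->
  valid_tableau T ->
  expanded T ->
  nG (troot T) = [phi] ->
  nH (troot T) = [] ->
  nNx (troot T) = None ->
  nBD (troot T) = [] ->
  nBB (troot T) = [] ->
  nStat (troot T) <> Open ->
  ~ satisfiable phi.
Proof.
  intros Hn Hv He HG HH HN HBD HBB Hst [M [w Hw]].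
  apply Hst. apply (main M T Hv He w).
  repeat split.
  - intros x Hx; rewrite HG in Hx; destruct Hx as [<-|[]]; auto.
  - intros x Hx; rewrite HG in Hx; destruct Hx as [<-|[]]; auto.
  - rewrite HN in H; discriminate.
  - rewrite HN in H; discriminate.
  - intros _ y Hy; rewrite HBD in Hy; auto.
  - intros x Hx; rewrite HN in Hx; discriminate.
Qed.
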